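(* Let $p_1>p_2$ be relatively prime positive integers. Then the set $\{S_c(p_1,p_2): c\in[0,1]\}$ of apportionment sequences of stationary divisor methods contains exactly $p_1-p_2+1$ distinct sequences.
   Context: Stationary divisor method with cut point $c\in[0,1]$ for votes $(p_1,p_2)$: seats are allocated one at a time. Initially $a_1=a_2=0$; each next seat goes to a party $i$ maximizing $p_i/(a_i+c)$, whose $a_i$ then increases by $1$. Ties are broken in favor of party $1$. For $c=0$ the convention is that $p_1/0>p_2/0$, and $p_i/0>p_j/k$ for $k>0$. $S_c(p_1,p_2)$ is the infinite sequence of party labels (in $\{1,2\}$) of successive seats. *)

(* Defs.v *)
From Stdlib Require Import Reals Arith.
Open Scope R_scope.

(* Party 1 wins iff p1/(a1+c) >= p2/(a2+c) (ties to party 1), with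
   the c = 0 convention: p1/0 > p2/0, and p_i/0 > p_j/k for k > 0. *)
Definition party1_next (c : R) (p1 p2 : nat) (a1 a2 : nat) : bool :=
  if Req_EM_T c 0 then
    match a1, a2 with
    | O, _ => true
    | S _, O => false
    | S _, S _ => if Rle_dec (INR p2 / INR a2) (INR p1 / INR a1) then true else false
    end
  else
    if Rle_dec (INR p2 / (INR a2 + c)) (INR p1 / (INR a1 + c)) then true else false.

Fixpoint seats (c : R) (p1 p2 : nat) (n : nat) : nat * nat :=
  match n with
  | O => (O, O)
  | S m => let '(a1, a2) := seats c p1 p2 m in
           if party1_next c p1 p2 a1 a2 then (S a1, a2) else (a1, S a2)
  end.

(* S_c(p1,p2): the label (1 or 2) of the (n+1)-th seat, n = 0,1,2,... *)
Definition apportionment_seq (c : R) (p1 p2 : nat) (n : nat) : nat :=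
  let '(a1, a2) := seats c p1 p2 n in
  if party1_next c p1 p2 a1 a2 then 1%nat else 2%nat.

(* Main.v *)
Require Import Defs.
From Stdlib Require Import Reals Arith ZArith Lia Lra Psatz.
Open Scope R_scope.

Lemma div_le_iff (a b e d : R) : 0 < b -> 0 < d -> (a / b <= e / d <-> a * d <= e * b).
Proof.
  intros Hb Hd; split; intro H.
  - assert (H2 : a / b * (b * d) <= e / d * (b * d)) by (apply Rmult_le_compat_r; nra).
    replace (a / b * (b * d)) with (a * d) in H2 by (field; lra).
    replace (e / d * (b * d)) with (e * b) in H2 by (field; lra).
    exact H2.
  - assert (H2 : a * d * / (b * d) <= e * b * / (b * d)).
    { apply Rmult_le_compat_r; [|exact H]. left; apply Rinv_0_lt_compat; nra. }
    replace (a * d * / (b * d)) with (a / b) in H2 by (field; lra).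
    replace (e * b * / (b * d)) with (e / d) in H2 by (field; lra).
    exact H2.
Qed.

Lemma L1 (c : R) (p1 p2 a1 a2 : nat) : 0 <= c -> (0 < p1)%nat -> (0 < p2)%nat ->
  (party1_next c p1 p2 a1 a2 = true <->
   INR p2 * INR a1 - INR p1 * INR a2 <= c * (INR p1 - INR p2)).
Proof.
  intros Hc H1 H2.
  assert (E1 : 0 < INR p1) by (apply lt_0_INR; lia).
  assert (E2 : 0 < INR p2) by (apply lt_0_INR; lia).
  unfold party1_next.
  destruct (Req_EM_T c 0) as [->|Hc0].
  - destruct a1 as [|a1]; destruct a2 as [|a2].
    + simpl; split; intros; [lra|reflexivity].
    + split; intros; [|reflexivity]. rewrite Rmult_0_l.
      assert (0 <= INR (S a2)) by apply pos_INR. rewrite ?INR_0. nra.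
    + split; intro H; [discriminate|]. exfalso.
      assert (0 < INR (S a1)) by (apply lt_0_INR; lia). rewrite ?INR_0, ?Rmult_0_l, ?Rmult_0_r in H. nra.
    + assert (A1 : 0 < INR (S a1)) by (apply lt_0_INR; lia).
      assert (A2 : 0 < INR (S a2)) by (apply lt_0_INR; lia).
      pose proof (div_le_iff (INR p2) (INR (S a2)) (INR p1) (INR (S a1)) A2 A1) as D.
      destruct (Rle_dec _ _) as [H|H].
      * split; intros; [|reflexivity]. apply D in H. nra.
      * split; intro H'; [discriminate|]. exfalso; apply H. apply D. nra.
  - assert (Hcp : 0 < c) by lra.
    assert (A1 : 0 < INR a1 + c) by (pose proof (pos_INR a1); lra).
    assert (A2 : 0 < INR a2 + c) by (pose proof (pos_INR a2); lra).
    pose proof (div_le_iff (INR p2) (INR a2 + c) (INR p1) (INR a1 + c) A2 A1) as D.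
    destruct (Rle_dec _ _) as [H|H].
    + split; intros; [|reflexivity]. apply D in H. nra.
    + split; intro H'; [discriminate|]. exfalso; apply H. apply D. nra.
Qed.

Definition Pm (c : R) (D m : Z) := forall z : Z, IZR z <= c * IZR D <-> (z <= m)%Z.

Lemma L2 (c : R) (p1 p2 a1 a2 : nat) (m : Z) : 0 <= c -> (0 < p1)%nat -> (0 < p2)%nat ->
  Pm c (Z.of_nat p1 - Z.of_nat p2) m ->
  party1_next c p1 p2 a1 a2 =
  (Z.of_nat p2 * Z.of_nat a1 - Z.of_nat p1 * Z.of_nat a2 <=? m)%Z.
Proof.
  intros Hc H1 H2 HP.
  pose proof (L1 c p1 p2 a1 a2 Hc H1 H2) as HL.
  specialize (HP (Z.of_nat p2 * Z.of_nat a1 - Z.of_nat p1 * Z.of_nat a2)%Z).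
  rewrite minus_IZR, !mult_IZR, minus_IZR, <- !INR_IZR_INZ in HP.
  destruct (party1_next c p1 p2 a1 a2); destruct (Z.leb_spec0 (Z.of_nat p2 * Z.of_nat a1 - Z.of_nat p1 * Z.of_nat a2) m) as [h|h];
  try reflexivity; exfalso.
  - apply h, HP, HL; reflexivity.
  - assert (E : false = true) by (apply HL, HP, h). discriminate.
Qed.

Fixpoint X (P1 P2 m : Z) (n : nat) : Z :=
  match n with
  | O => 0%Z
  | S k => let x := X P1 P2 m k in if (x <=? m)%Z then (x + P2)%Z else (x - P1)%Z
  end.

Lemma seats_X (c : R) (p1 p2 : nat) (m : Z) : 0 <= c -> (0 < p1)%nat -> (0 < p2)%nat ->
  Pm c (Z.of_nat p1 - Z.of_nat p2) m -> forall n,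
  let '(a1, a2) := seats c p1 p2 n in
  (Z.of_nat p2 * Z.of_nat a1 - Z.of_nat p1 * Z.of_nat a2)%Z = X (Z.of_nat p1) (Z.of_nat p2) m n.
Proof.
  intros Hc H1 H2 HP n. induction n as [|n IH]; [simpl; lia|].
  simpl. destruct (seats c p1 p2 n) as [a1 a2].
  rewrite (L2 c p1 p2 a1 a2 m Hc H1 H2 HP). rewrite IH.
  destruct (X _ _ m n <=? m)%Z; lia.
Qed.

Lemma apport_X (c : R) (p1 p2 : nat) (m : Z) : 0 <= c -> (0 < p1)%nat -> (0 < p2)%nat ->
  Pm c (Z.of_nat p1 - Z.of_nat p2) m -> forall n,
  apportionment_seq c p1 p2 n =
  if (X (Z.of_nat p1) (Z.of_nat p2) m n <=? m)%Z then 1%nat else 2%nat.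
Proof.
  intros Hc H1 H2 HP n. pose proof (seats_X c p1 p2 m Hc H1 H2 HP n) as E.
  unfold apportionment_seq. destruct (seats c p1 p2 n) as [a1 a2].
  rewrite (L2 c p1 p2 a1 a2 m Hc H1 H2 HP), E. reflexivity.
Qed.

Lemma X_window (P1 P2 m : Z) : (0 < P1)%Z -> (0 < P2)%Z -> (0 <= m <= P1 - 1)%Z ->
  forall n, (m - P1 + 1 <= X P1 P2 m n <= m + P2)%Z.
Proof.
  intros H1 H2 Hm n; induction n; simpl; [lia|].
  destruct (Z.leb_spec0 (X P1 P2 m n) m); lia.
Qed.

Lemma X_cong (P1 P2 m : Z) n : exists k, X P1 P2 m n = (Z.of_nat n * P2 - k * (P1 + P2))%Z.
Proof.
  induction n as [|n [k IH]]; [exists 0%Z; simpl; lia|].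
  rewrite Nat2Z.inj_succ; cbn [X].
  destruct (X P1 P2 m n <=? m)%Z; [exists k|exists (k+1)%Z]; lia.
Qed.

Lemma hit (P1 P2 r : Z) : (0 < P1)%Z -> (0 < P2)%Z -> Z.gcd P1 P2 = 1%Z ->
  exists n : nat, exists t, (Z.of_nat n * P2 - r = t * (P1 + P2))%Z.
Proof.
  intros H1 H2 G.
  assert (G' : Z.gcd P2 (P1 + P2) = 1%Z).
  { rewrite Z.gcd_add_diag_r, Z.gcd_comm; exact G. }
  destruct (Z.gcd_bezout _ _ _ G') as [a [b Hab]].
  set (N := (P1 + P2)%Z) in *.
  exists (Z.to_nat ((r * a) mod N)).
  assert (HN : (0 < N)%Z) by (unfold N; lia).
  pose proof (Z.mod_pos_bound (r * a) N HN).
  rewrite Z2Nat.id by lia.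
  rewrite Z.mod_eq by lia.
  exists (- (r * a / N) * P2 - r * b)%Z.
  generalize (r * a / N)%Z; intro q.
  transitivity ((r * a - N * q) * P2 - r * (a * P2 + b * N))%Z; [rewrite Hab; ring | ring].
Qed.

Lemma gcdZ (p1 p2 : nat) : (0 < p1)%nat -> Nat.gcd p1 p2 = 1%nat ->
  Z.gcd (Z.of_nat p1) (Z.of_nat p2) = 1%Z.
Proof.
  intros H G. pose proof (Nat.gcd_bezout_pos p1 p2 H) as B. rewrite G in B.
  destruct B as [a [b E]]. apply Z.bezout_1_gcd.
  exists (Z.of_nat a), (- Z.of_nat b)%Z. lia.
Qed.

Lemma Pi (p1 p2 i : nat) : (p2 < p1)%nat -> (i <= p1 - p2)%nat ->
  Pm (INR i / INR (p1 - p2)) (Z.of_nat p1 - Z.of_nat p2) (Z.of_nat i).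
Proof.
  intros H Hi z.
  assert (HD : IZR (Z.of_nat p1 - Z.of_nat p2) = INR p1 - INR p2)
    by (rewrite minus_IZR, <- !INR_IZR_INZ; reflexivity).
  assert (Hlt : INR p2 < INR p1) by (apply lt_INR; exact H).
  replace (INR i / INR (p1 - p2) * IZR (Z.of_nat p1 - Z.of_nat p2)) with (IZR (Z.of_nat i)).
  - split; [apply le_IZR|apply IZR_le].
  - rewrite HD, minus_INR by lia. rewrite <- INR_IZR_INZ. field. lra.
Qed.

Lemma Pint (c : R) (D : Z) : 0 <= c <= 1 -> (0 < D)%Z ->
  Pm c D (Int_part (c * IZR D)) /\ (0 <= Int_part (c * IZR D) <= D)%Z.
Proof.
  intros Hc HD. pose proof (base_Int_part (c * IZR D)) as [B1 B2].
  set (m := Int_part (c * IZR D)) in *.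
  assert (HDr : 0 < IZR D) by (apply IZR_lt; exact HD).
  split.
  - intro z; split; intro Hz.
    + destruct (Z_le_gt_dec z m) as [h|h]; [exact h|].
      exfalso. assert (IZR (m + 1) <= IZR z) by (apply IZR_le; lia).
      rewrite plus_IZR in H. lra.
    + apply IZR_le in Hz. lra.
  - split.
    + assert (IZR (-1) < IZR m) by (simpl; nra). apply lt_IZR in H. lia.
    + apply le_IZR. nra.
Qed.

Lemma dist (p1 p2 i j : nat) : (0 < p2)%nat -> (p2 < p1)%nat -> Nat.gcd p1 p2 = 1%nat ->
  (i < j)%nat -> (j <= p1 - p2)%nat ->
  exists n, apportionment_seq (INR i / INR (p1 - p2)) p1 p2 n <>
            apportionment_seq (INR j / INR (p1 - p2)) p1 p2 n.
Proof.
  intros H2 H1 G Hij Hj.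
  assert (Hp1 : (0 < p1)%nat) by lia.
  assert (HG := gcdZ p1 p2 Hp1 G).
  set (P1 := Z.of_nat p1) in *. set (P2 := Z.of_nat p2) in *.
  destruct (hit P1 P2 (Z.of_nat i + 1) ltac:(lia) ltac:(lia) HG) as [n [t Ht]].
  exists n.
  assert (Hc : forall k, (k <= p1 - p2)%nat -> 0 <= INR k / INR (p1 - p2)).
  { intros k _. unfold Rdiv. apply Rmult_le_pos; [apply pos_INR|].
    left; apply Rinv_0_lt_compat, lt_0_INR; lia. }
  rewrite (apport_X _ p1 p2 (Z.of_nat i) (Hc i ltac:(lia)) Hp1 H2 (Pi p1 p2 i H1 ltac:(lia))).
  rewrite (apport_X _ p1 p2 (Z.of_nat j) (Hc j ltac:(lia)) Hp1 H2 (Pi p1 p2 j H1 ltac:(lia))).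
  fold P1 P2.
  assert (Xv : forall m, (Z.of_nat i <= m <= Z.of_nat p1 - Z.of_nat p2)%Z ->
              X P1 P2 m n = (Z.of_nat i + 1)%Z).
  { intros m Hm.
    pose proof (X_window P1 P2 m ltac:(lia) ltac:(lia) ltac:(lia) n) as W.
    destruct (X_cong P1 P2 m n) as [k Hk].
    assert (E : X P1 P2 m n = (Z.of_nat i + 1 + (t - k) * (P1 + P2))%Z) by lia.
    rewrite E in W |- *. set (u := (t - k)%Z) in *.
    destruct (Z.lt_trichotomy u 0) as [hu|[hu|hu]].
    - exfalso. nia.
    - subst u. rewrite hu. lia.
    - exfalso. nia. }
  rewrite (Xv (Z.of_nat i)) by lia. rewrite (Xv (Z.of_nat j)) by lia.
  destruct (Z.leb_spec0 (Z.of_nat i + 1) (Z.of_nat i)); [lia|].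
  destruct (Z.leb_spec0 (Z.of_nat i + 1) (Z.of_nat j)); [|lia].
  discriminate.
Qed.

Theorem mainTheorem14 (p1 p2 : nat) :
  (0 < p2)%nat -> (p2 < p1)%nat -> Nat.gcd p1 p2 = 1%nat ->
  exists f : nat -> (nat -> nat),
    (forall i j, (i < p1 - p2 + 1)%nat -> (j < p1 - p2 + 1)%nat -> i <> j ->
       exists n, f i n <> f j n) /\
    (forall i, (i < p1 - p2 + 1)%nat ->
       exists c, 0 <= c <= 1 /\ forall n, f i n = apportionment_seq c p1 p2 n) /\
    (forall c, 0 <= c <= 1 ->
       exists i, (i < p1 - p2 + 1)%nat /\ forall n, f i n = apportionment_seq c p1 p2 n).
Proof.
  intros H2 H1 G.
  assert (Hp1 : (0 < p1)%nat) by lia.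
  assert (Hd : 0 < INR (p1 - p2)) by (apply lt_0_INR; lia).
  exists (fun i => apportionment_seq (INR i / INR (p1 - p2)) p1 p2).
  split; [|split].
  - intros i j Hi Hj Hij.
    destruct (Nat.lt_gt_cases i j) as [[h|h] _]; auto.
    + apply dist; auto; lia.
    + destruct (dist p1 p2 j i H2 H1 G h ltac:(lia)) as [n Hn]. exists n. auto.
  - intros i Hi. exists (INR i / INR (p1 - p2)). split; [|auto].
    assert (INR i <= INR (p1 - p2)) by (apply le_INR; lia).
    pose proof (pos_INR i).
    split.
    + unfold Rdiv. apply Rmult_le_pos; [lra|]. left; apply Rinv_0_lt_compat; lra.
    + apply (Rmult_le_reg_r (INR (p1 - p2))); [lra|].
      field_simplify; lra.
  - intros c Hc.
    assert (HD : (0 < Z.of_nat p1 - Z.of_nat p2)%Z) by lia.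
    destruct (Pint c _ Hc HD) as [HP Hm].
    set (m := Int_part (c * IZR (Z.of_nat p1 - Z.of_nat p2))) in *.
    exists (Z.to_nat m). split; [lia|].
    intro n.
    assert (Hc0 : 0 <= INR (Z.to_nat m) / INR (p1 - p2)).
    { unfold Rdiv. apply Rmult_le_pos; [apply pos_INR|]. left; apply Rinv_0_lt_compat; lra. }
    pose proof (Pi p1 p2 (Z.to_nat m) H1 ltac:(lia)) as HPi.
    rewrite Z2Nat.id in HPi by lia.
    rewrite (apport_X _ p1 p2 m Hc0 Hp1 H2 HPi).
    rewrite (apport_X c p1 p2 m ltac:(lra) Hp1 H2 HP).
    reflexivity.
Qed.
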